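(* Consider binary-tree pivotal sampling on a fixed full binary tree $T$ under the standing assumptions. Define a random assignment of values $\eta_v\in\{0,1\}$ to all non-root nodes of $T$ top-down as follows: for the children $r_1,r_2$ of the root, set $(\eta_{r_1},\eta_{r_2})=(1,0)$ with probability $\pi_{r_1}$ and $(0,1)$ otherwise; then, proceeding level by level, for each internal node $v$ already assigned, with children $v_1,v_2$, draw $(\eta_{v_1},\eta_{v_2})$ independently of everything else from the conditional law given $\xi_v=\eta_v$ described by: if $\pi_{v_1}+\pi_{v_2}>1$, $(1,1)$ when $\eta_v=1$, and when $\eta_v=0$, $(1,0)$ with probability $\frac{1-\pi_{v_2}}{2-\pi_{v_1}-\pi_{v_2}}$ and $(0,1)$ otherwise; if $\pi_{v_1}+\pi_{v_2}<1$, $(0,0)$ when $\eta_v=0$, and when $\eta_v=1$, $(1,0)$ with probability $\frac{\pi_{v_1}}{\pi_{v_1}+\pi_{v_2}}$ and $(0,1)$ otherwise. Then the vector $(\eta_\ell)_{\ell\text{ leaf}}$ has the same joint distribution as the vector $(\xi_\ell)_{\ell\text{ leaf}}$ of leaf inclusion indicators produced by binary-tree pivotal sampling.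
   Context: Binary-tree pivotal sampling: let $T$ be a full binary tree whose leaves are identified with an index set, and let $q_i\in[0,1]$ be leaf probabilities with integer sum. Each node can store an index together with a current probability; initially each leaf $i$ stores $i$ with probability $q_i$, and the output set $\mathcal S_{\rm out}$ is empty. Repeatedly choose two sibling nodes that both store indices, say $i$ with probability $q_i$ and $j$ with probability $q_j$, with parent $P$, and remove them. If $q_i+q_j\le1$: with probability $q_i/(q_i+q_j)$ store $i$ at $P$ with probability $q_i+q_j$ ($j$ is rejected), otherwise store $j$ at $P$ with probability $q_i+q_j$ ($i$ is rejected). If $q_i+q_j>1$: with probability $(1-q_i)/(2-q_i-q_j)$ put $j$ into $\mathcal S_{\rm out}$ and store $i$ at $P$ with probability $q_i+q_j-1$; otherwise put $i$ into $\mathcal S_{\rm out}$ and store $j$ at $P$ with probability $q_i+q_j-1$. When only the root stores an index, put it into $\mathcal S_{\rm out}$ iff its probability is $1$. Carried probabilities: $\pi_v=q_i$ for a leaf $v$ with index $i$; for an internal node $v$ with children $v_1,v_2$, $\pi_v=\pi_{v_1}+\pi_{v_2}$ if $\pi_{v_1}+\pi_{v_2}<1$ and $\pi_v=\pi_{v_1}+\pi_{v_2}-1$ if $\pi_{v_1}+\pi_{v_2}>1$. Node statuses: for a non-root node $v$, $\xi_v\in\{0,1\}$ is the indicator that the index stored at $v$ (for a leaf, its own index; for an internal node, the index promoted to $v$ by the comparison of its children) belongs to the final output $\mathcal S_{\rm out}$. Standing assumptions: all leaf probabilities lie in $(0,1)$; for every internal non-root node $v$ with children $v_1,v_2$, $\pi_{v_1}+\pi_{v_2}\ne1$;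 for the two children $r_1,r_2$ of the root, $\pi_{r_1}+\pi_{r_2}=1$. *)

(* Defs.v *)
From mathcomp Require Import all_boot all_order all_algebra.
Set Implicit Arguments. Unset Strict Implicit. Unset Printing Implicit Defensive.
Import Order.TTheory GRing.Theory Num.Theory.
Local Open Scope ring_scope.

(* Full binary trees whose leaves carry their probability q_i.
   Leaves are indexed by their position in left-to-right order. *)
Inductive tree (R : Type) : Type :=
| Leaf of R
| Node of tree R & tree R.
Arguments Leaf {R}.
Arguments Node {R}.

Section Defs.
Variable R : realFieldType.

Fixpoint nleaves (t : tree R) : nat :=
  match t with Leaf _ => 1%N | Node l r => (nleaves l + nleaves r)%N end.

Fixpoint sumq (t : tree R) : R :=
  match t with Leaf q => q | Node l r => sumq l + sumq r end.

Fixpoint leaves_open01 (t : tree R) : Prop :=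
  match t with
  | Leaf q => 0 < q < 1
  | Node l r => leaves_open01 l /\ leaves_open01 r
  end.

(* carried probabilities pi_v (the case sum = 1 only occurs at the root
   under the standing assumptions; there we set carried = 1, irrelevant) *)
Fixpoint carried (t : tree R) : R :=
  match t with
  | Leaf q => q
  | Node l r => let s := carried l + carried r in if s <= 1 then s else s - 1
  end.

(* for every internal node of t (t itself is NOT the root of T):
   pi_{v1} + pi_{v2} <> 1 *)
Fixpoint internal_ne1 (t : tree R) : Prop :=
  match t with
  | Leaf _ => True
  | Node l r => carried l + carried r != 1 /\ internal_ne1 l /\ internal_ne1 r
  end.

(* finitely supported (sub)probability distributions: weighted outcomes *)
Definition dist (A : Type) := seq (R * A).

Definition dscale (A : Type) (c : R) (d : dist A) : dist A :=
  [seq (c * p.1, p.2) | p <- d].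

Definition dprod (A B C : Type) (f : A -> B -> C) (d1 : dist A) (d2 : dist B)
  : dist C :=
  [seq (p1.1 * p2.1, f p1.2 p2.2) | p1 <- d1, p2 <- d2].

Definition mass (A : eqType) (d : dist A) (b : A) : R :=
  \sum_(p <- d | p.2 == b) p.1.

(* ---- Binary-tree pivotal sampling (bottom-up) ----
   The state of a processed subtree: the inclusion indicators of its leaves
   (true = already put in S_out), the (local) index stored at the subtree's
   root and its current probability. *)
Definition pstate := (seq bool * nat * R)%type.

Definition merge (a b : pstate) : dist pstate :=
  let: (s1, i, qi) := a in
  let: (s2, j0, qj) := b in
  let j := (size s1 + j0)%N in
  let s := s1 ++ s2 in
  if qi + qj <= 1 then
    [:: (qi / (qi + qj), (s, i, qi + qj));
        (1 - qi / (qi + qj), (s, j, qi + qj))]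
  else
    [:: ((1 - qi) / (2 - qi - qj), (set_nth false s j true, i, qi + qj - 1));
        (1 - (1 - qi) / (2 - qi - qj), (set_nth false s i true, j, qi + qj - 1))].

Fixpoint pivotal_sub (t : tree R) : dist pstate :=
  match t with
  | Leaf q => [:: (1, ([:: false], 0%N, q))]
  | Node l r =>
      flatten [seq dscale (p1.1 * p2.1) (merge p1.2 p2.2)
              | p1 <- pivotal_sub l, p2 <- pivotal_sub r]
  end.

Definition pivotal (t : tree R) : dist (seq bool) :=
  [seq (p.1, let: (s, i, q) := p.2 in if q == 1 then set_nth false s i true else s)
  | p <- pivotal_sub t].

(* ---- Top-down assignment eta ----
   topdown_sub t b : law of the leaf values (eta_l)_l of subtree t given eta_t = b *)
Fixpoint topdown_sub (t : tree R) (b : bool) : dist (seq bool) :=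
  match t with
  | Leaf _ => [:: (1, [:: b])]
  | Node l r =>
      let p1 := carried l in let p2 := carried r in
      let both (b1 b2 : bool) := dprod cat (topdown_sub l b1) (topdown_sub r b2) in
      if 1 < p1 + p2 then
        if b then both true true
        else dscale ((1 - p2) / (2 - p1 - p2)) (both true false) ++
             dscale (1 - (1 - p2) / (2 - p1 - p2)) (both false true)
      else
        if ~~ b then both false false
        else dscale (p1 / (p1 + p2)) (both true false) ++
             dscale (1 - p1 / (p1 + p2)) (both false true)
  end.

Definition topdown (r1 r2 : tree R) : dist (seq bool) :=
  dscale (carried r1) (dprod cat (topdown_sub r1 true) (topdown_sub r2 false)) ++
  dscale (1 - carried r1) (dprod cat (topdown_sub r1 false) (topdown_sub r2 true)).

End Defs.

(* Main.v *)
Require Import Defs.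
From mathcomp Require Import all_boot all_order all_algebra.
From mathcomp Require Import ring lra zify.
Import Order.TTheory GRing.Theory Num.Theory.
Local Open Scope ring_scope.

Set Implicit Arguments. Unset Strict Implicit.
Section H.
Variable R : realFieldType.

Definition E (A : Type) (d : dist R A) (f : A -> R) : R := \sum_(p <- d) p.1 * f p.2.

Lemma E_cat A (d1 d2 : dist R A) f : E (d1 ++ d2) f = E d1 f + E d2 f.
Proof. by rewrite /E big_cat. Qed.

Lemma E_scale A c (d : dist R A) f : E (dscale c d) f = c * E d f.
Proof. rewrite /E /dscale big_map mulr_sumr; apply: eq_bigr => p _ /=; by rewrite mulrA. Qed.

Lemma E_prod A B C (g : A -> B -> C) (d1 : dist R A) d2 f :
  E (dprod g d1 d2) f = E d1 (fun a => E d2 (fun c => f (g a c))).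
Proof.
rewrite /E /dprod big_allpairs_dep. apply: eq_bigr => p _ /=.
rewrite mulr_sumr; apply: eq_bigr => q _ /=; by rewrite mulrA.
Qed.

Lemma E_ext A (d : dist R A) f g : (forall x, f x = g x) -> E d f = E d g.
Proof. move=> H; rewrite /E; apply: eq_bigr => p _; by rewrite H. Qed.

Lemma E_eq_in (A : eqType) (d : dist R A) f g :
  (forall p, p \in d -> f p.2 = g p.2) -> E d f = E d g.
Proof. move=> H; rewrite /E big_seq_cond [RHS]big_seq_cond; apply: eq_bigr => p /andP[Hp _]; by rewrite H. Qed.

Lemma E_scaleF A (d : dist R A) c f : c * E d f = E d (fun x => c * f x).
Proof. rewrite /E mulr_sumr; apply: eq_bigr => p _; ring. Qed.

Lemma E_addF A (d : dist R A) f g : E d f + E d g = E d (fun x => f x + g x).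
Proof. rewrite /E -big_split; apply: eq_bigr => p _ /=; ring. Qed.

Lemma set_cat1 (s1 s2 : seq bool) i y : (i < size s1)%N ->
  set_nth false (s1 ++ s2) i y = set_nth false s1 i y ++ s2.
Proof. elim: s1 i => [|x s1 IH] [|i] //= H. by rewrite IH. Qed.

Lemma set_cat2 (s1 s2 : seq bool) n j y : n = size s1 ->
  set_nth false (s1 ++ s2) (n + j) y = s1 ++ set_nth false s2 j y.
Proof. move=> ->; elim: s1 => [|x s1 IH] //=. by rewrite IH. Qed.

Lemma size_set_lt (s : seq bool) i y : (i < size s)%N -> size (set_nth false s i y) = size s.
Proof. move=> H; rewrite size_set_nth; apply/maxn_idPr; exact: H. Qed.

End H.
Lemma E_piv_node (R : realFieldType) l r h :
  E (pivotal_sub (Node l r)) h =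
  E (pivotal_sub l) (fun a => E (pivotal_sub r) (fun c => E (Defs.merge a c) h)) :> R.
Proof.
rewrite /= /E big_flatten big_allpairs_dep /=.
apply: eq_bigr => p _; rewrite mulr_sumr; apply: eq_bigr => q _.
rewrite /dscale big_map mulr_sumr mulr_sumr; apply: eq_bigr => x _ /=; ring.
Qed.
Definition setb (R : realFieldType) (b : bool) (st : pstate R) :=
  if b then set_nth false st.1.1 st.1.2 true else st.1.1.

Lemma piv_inv (R : realFieldType) (t : tree R) p : p \in pivotal_sub t ->
  [/\ size p.2.1.1 = nleaves t, (p.2.1.2 < nleaves t)%N & p.2.2 = carried t].
Proof.
elim: t p => [q|l IHl r IHr] p /=.
  by rewrite inE => /eqP -> /=.
case/flattenP => d /allpairsPdep [[w1 [[s1 i] q1]] [[w2 [[s2 j] q2]] [Hp1 Hp2 ->]]].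
case: (IHl _ Hp1) => /= E1 I1 Q1; case: (IHr _ Hp2) => /= E2 I2 Q2.
case/mapP => x + ->{p} /=; rewrite /Defs.merge -Q1 -Q2.
have Hi : (i < size (s1 ++ s2))%N by rewrite size_cat E1 ltn_addr.
have Hj : (size s1 + j < size (s1 ++ s2))%N by rewrite size_cat E1 ltn_add2l E2.
case: ifP => H; rewrite !inE => /orP [] /eqP -> /=; split => //.
all: try rewrite size_set_lt //.
all: rewrite ?size_cat; lia.


Qed.
Lemma carried_bd (R : realFieldType) (t : tree R) :
  leaves_open01 t -> internal_ne1 t -> 0 < carried t < 1.
Proof.
elim: t => [q|l IHl r IHr] //= [Ol Or] [Hne [Nl Nr]].
case/andP: (IHl Ol Nl) => a1 b1; case/andP: (IHr Or Nr) => a2 b2.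
case: ifP => H; apply/andP; split.
- lra.
- rewrite lt_neqAle H andbT; exact: Hne.
- move/negbT: H; rewrite -ltNge => H; lra.
- lra.
Qed.

Lemma E_merge (R : realFieldType) (s1 s2 : seq bool) i j (q1 q2 : R) b f :
  (i < size s1)%N -> (j < size s2)%N ->
  E (Defs.merge (s1, i, q1) (s2, j, q2)) (fun st => f (setb b st)) =
  if q1 + q2 <= 1 then
    (if b then q1 / (q1 + q2) * f (set_nth false s1 i true ++ s2)
               + (1 - q1 / (q1 + q2)) * f (s1 ++ set_nth false s2 j true)
     else f (s1 ++ s2))
  else
    (if b then f (set_nth false s1 i true ++ set_nth false s2 j true)
     else (1 - q1) / (2 - q1 - q2) * f (s1 ++ set_nth false s2 j true)
          + (1 - (1 - q1) / (2 - q1 - q2)) * f (set_nth false s1 i true ++ s2)).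
Proof.
move=> Hi Hj; rewrite /Defs.merge /E.
have S2 := @set_cat2 s1 s2 (size s1) j true (erefl _).
have S1 := @set_cat1 s1 s2 i true Hi.
case: ifP => H; case: b; rewrite !big_cons big_nil /setb /= ?S1 ?S2; try ring.
- rewrite set_cat1 // set_cat2 ?size_set_lt //; ring.
Qed.
Lemma main_sub (R : realFieldType) (t : tree R) :
  leaves_open01 t -> internal_ne1 t -> forall b f,
  E (pivotal_sub t) (fun st => f (setb b st)) = E (topdown_sub t b) f.
Proof.
elim: t => [q|l IHl r IHr].
  by move=> _ _ [] f; rewrite /E /= !big_cons !big_nil.
move=> [Ol Or] [Hne [Nl Nr]] b f.
have IHl' := IHl Ol Nl; have IHr' := IHr Or Nr.
case/andP: (carried_bd Ol Nl) => a1 b1; case/andP: (carried_bd Or Nr) => a2 b2.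
set p1 := carried l in a1 b1 *; set p2 := carried r in a2 b2 *.
rewrite E_piv_node.
pose G (x1 x0 y1 y0 : seq bool) :=
  if p1 + p2 <= 1 then
    (if b then p1 / (p1 + p2) * f (x1 ++ y0) + (1 - p1 / (p1 + p2)) * f (x0 ++ y1)
     else f (x0 ++ y0))
  else
    (if b then f (x1 ++ y1)
     else (1 - p1) / (2 - p1 - p2) * f (x0 ++ y1)
          + (1 - (1 - p1) / (2 - p1 - p2)) * f (x1 ++ y0)).
transitivity (E (pivotal_sub l) (fun a => E (pivotal_sub r) (fun c =>
   G (setb true a) (setb false a) (setb true c) (setb false c)))).
  apply: E_eq_in => -[w1 [[s1 i] q1]] Hp1; apply: E_eq_in => -[w2 [[s2 j] q2]] Hp2.
  case: (piv_inv Hp1) => /= E1 I1 Q1; case: (piv_inv Hp2) => /= E2 I2 Q2.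
  rewrite E_merge ?E1 ?E2 // Q1 Q2 //.
have nz : 2 - p1 - p2 != 0 by apply: lt0r_neq0; lra.
have e1 : (1 - p2) / (2 - p1 - p2) = 1 - (1 - p1) / (2 - p1 - p2).
  by field.
have e2 : 1 - (1 - p2) / (2 - p1 - p2) = (1 - p1) / (2 - p1 - p2).
  by field.
have DP : forall c1 c2 (g : seq bool -> R),
  E (dprod cat (topdown_sub l c1) (topdown_sub r c2)) g =
  E (pivotal_sub l) (fun a => E (pivotal_sub r) (fun c => g (setb c1 a ++ setb c2 c))).
  move=> c1 c2 g; rewrite E_prod -IHl'; apply: E_ext => a /=; by rewrite -IHr'.
rewrite /G /= -/p1 -/p2; clear G; case: leP => H; case: b;
  rewrite ?E_cat ?E_scale !DP ?e1 ?e2 ?E_scaleF ?E_addF; apply: E_ext => a;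
  rewrite ?E_scaleF ?E_addF; apply: E_ext => c; rewrite /setb /=; ring.
Qed.


Lemma E_map (R : realFieldType) A B (d : dist R A) (F : A -> B) h :
  E [seq (p.1, F p.2) | p <- d] h = E d (fun x => h (F x)).
Proof. by rewrite /E big_map. Qed.

Lemma mass_E (R : realFieldType) (A : eqType) (d : dist R A) x :
  mass d x = E d (fun y => (y == x)%:R).
Proof.
rewrite /mass /E big_mkcond; apply: eq_bigr => p _ /=.
by case: (p.2 == x); rewrite ?mulr1 ?mulr0.
Qed.

Theorem propositionE12 (R : realFieldType) (r1 r2 : tree R) :
  leaves_open01 (Node r1 r2) ->
  (exists n : nat, sumq (Node r1 r2) = n%:R) ->
  internal_ne1 r1 -> internal_ne1 r2 ->
  carried r1 + carried r2 = 1 ->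
  forall b : seq bool,
    mass (pivotal (Node r1 r2)) b = mass (topdown r1 r2) b.
Proof.
move=> [Ol Or] _ Nl Nr Hc b.
set g := fun y : seq bool => (y == b)%:R : R.
rewrite !mass_E -/g.
have DP : forall c1 c2 (h : seq bool -> R),
  E (dprod cat (topdown_sub r1 c1) (topdown_sub r2 c2)) h =
  E (pivotal_sub r1) (fun a => E (pivotal_sub r2) (fun c => h (setb c1 a ++ setb c2 c))).
  move=> c1 c2 h; rewrite E_prod -(main_sub Ol Nl); apply: E_ext => a /=.
  by rewrite -(main_sub Or Nr).
rewrite /topdown E_cat !E_scale !DP !E_scaleF E_addF.
have -> : E (pivotal (Node r1 r2)) g = E (pivotal_sub (Node r1 r2))
  (fun st => g (let: (s, i, q) := st in if q == 1 then set_nth false s i true else s)).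
  by rewrite /E /pivotal big_map.
rewrite E_piv_node.
apply: E_eq_in => -[w1 [[s1 i] q1]] Hp1.
rewrite !E_scaleF E_addF.
apply: E_eq_in => -[w2 [[s2 j] q2]] Hp2.
case: (piv_inv Hp1) => /= E1 I1 Q1; case: (piv_inv Hp2) => /= E2 I2 Q2.
rewrite /Defs.merge Q1 Q2 Hc lexx divr1 /E !big_cons big_nil /= eqxx.
rewrite /setb /= set_cat1 ?E1 // set_cat2 //; ring.
Qed.
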